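(* For any weighted finite graph $G$ with $N$ vertices and each $1\leq k\leq N$, \[ \overline{h}(k)\geq\frac{1}{2}\bigl(1-h(k)\bigr). \]
   Context: $G=(V,E,w)$ is a finite undirected graph without self-loops, $N=|V|$, positive symmetric edge weights $w_{uv}$ ($w_{uv}=0$ for non-edges), degrees $d_u=\sum_v w_{uv}$ (implicitly positive). $|E(A,B)|:=\sum_{u\in A,v\in B}w_{uv}$, $\mathrm{vol}(A):=\sum_{u\in A}d_u$, $\overline{A}=V\setminus A$. For nonempty $S$, $\phi(S):=|E(S,\overline{S})|/\mathrm{vol}(S)$; $h(k):=\min\max_{1\leq i\leq k}\phi(S_i)$ over all collections of $k$ nonempty pairwise disjoint subsets of $V$. For disjoint $V_1,V_2$ with $V_1\cup V_2\neq\emptyset$, $\overline{\phi}(V_1,V_2):=2|E(V_1,V_2)|/\mathrm{vol}(V_1\cup V_2)$; $\overline{h}(k):=\max\min_{1\leq i\leq k}\overline{\phi}(V_{2i-1},V_{2i})$ over all collections of $k$ pairs $(V_1,V_2),\ldots,(V_{2k-1},V_{2k})$ of pairwise disjoint subsets of $V$ with $V_{2i-1}\cup V_{2i}\neq\emptyset$ for each $i$. *)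

(* Defs.v *)
From HB Require Import structures.
From mathcomp Require Import all_boot all_order all_algebra.
Set Implicit Arguments. Unset Strict Implicit. Unset Printing Implicit Defensive.
Import Order.TTheory GRing.Theory Num.Theory.
Local Open Scope ring_scope.

Section Defs.
Variables (R : realFieldType) (V : finType) (w : V -> V -> R).

(* minimum / maximum of a finite NONEMPTY list of reals
   (the default value head 0 s is an element of s, so it is harmless) *)
Definition seq_min (s : seq R) : R := \big[Num.min/head 0 s]_(x <- s) x.
Definition seq_max (s : seq R) : R := \big[Num.max/head 0 s]_(x <- s) x.

Definition deg (u : V) : R := \sum_(v : V) w u v.
Definition cut (A B : {set V}) : R := \sum_(u in A) \sum_(v in B) w u v.
Definition vol (A : {set V}) : R := \sum_(u in A) deg u.
Definition phi (S : {set V}) : R := cut S (~: S) / vol S.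
Definition phibar (A B : {set V}) : R := 2 * cut A B / vol (A :|: B).

Definition adm_h (k : nat) (F : {ffun 'I_k -> {set V}}) : bool :=
  [forall i, F i != set0] &&
  [forall i, forall j, (i != j) ==> [disjoint F i & F j]].

Definition hk (k : nat) : R :=
  seq_min [seq seq_max [seq phi (F i) | i <- enum 'I_k]
          | F : {ffun 'I_k -> {set V}} <- enum (@adm_h k)].

(* k pairs (V_{2i-1}, V_{2i}) = ((P i).1, (P i).2); all 2k sets pairwise
   disjoint, and each union nonempty *)
Definition adm_hbar (k : nat) (P : {ffun 'I_k -> {set V} * {set V}}) : bool :=
  [forall i, ((P i).1 :|: (P i).2) != set0] &&
  [forall i, [disjoint (P i).1 & (P i).2]] &&
  [forall i, forall j, (i != j) ==>
     [&& [disjoint (P i).1 & (P j).1], [disjoint (P i).1 & (P j).2],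
         [disjoint (P i).2 & (P j).1] & [disjoint (P i).2 & (P j).2]]].

Definition hbark (k : nat) : R :=
  seq_max [seq seq_min [seq phibar (P i).1 (P i).2 | i <- enum 'I_k]
          | P : {ffun 'I_k -> {set V} * {set V}} <- enum (@adm_hbar k)].

End Defs.

(* Main.v *)
Require Import Defs.
From HB Require Import structures.
From mathcomp Require Import all_boot all_order all_algebra.
From mathcomp Require Import lra.
Import Order.TTheory GRing.Theory Num.Theory.
Set Implicit Arguments. Unset Strict Implicit.
Local Open Scope ring_scope.

Section H.
Variables (R : realFieldType) (V : finType) (w : V -> V -> R).
Hypothesis w_sym : forall u v, w u v = w v u.
Hypothesis w_noloop : forall u, w u u = 0.

Lemma cutL (A B : {set V}) u : u \in A ->
  cut w A B = \sum_(v in B) w u v + cut w (A :\ u) B.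
Proof.
move=> uA; rewrite /cut (bigD1 u) //=; congr (_ + _).
by apply: eq_bigl => x; rewrite in_setD1 andbC.
Qed.

Lemma cutR (A B : {set V}) u : u \in B ->
  cut w A B = \sum_(a in A) w a u + cut w A (B :\ u).
Proof.
move=> uB; rewrite /cut -big_split /=; apply: eq_bigr => a _.
rewrite (bigD1 u) //=; congr (_ + _).
by apply: eq_bigl => x; rewrite in_setD1 andbC.
Qed.

Lemma cut_sym A B : cut w A B = cut w B A.
Proof. rewrite /cut exchange_big /=; apply: eq_bigr => ? _; apply: eq_bigr => ? _; exact: w_sym. Qed.

Lemma sum_noloop (A : {set V}) u : \sum_(a in A) w a u = \sum_(a in A :\ u) w u a.
Proof.
case uA: (u \in A).
  rewrite (bigD1 u) //= w_noloop add0r; apply: eq_big => [x|x _]; last exact: w_sym.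
  by rewrite in_setD1 andbC.
apply: eq_big => [x|x _]; last exact: w_sym.
rewrite in_setD1; case: eqP => // ->; by rewrite uA.
Qed.

Lemma cut_splitL (S T B : {set V}) : T \subset S ->
  cut w S B = cut w T B + cut w (S :\: T) B.
Proof. by move=> /setIidPr TS; rewrite /cut (big_setID T) /= TS. Qed.

Lemma cut_splitR (S T B : {set V}) : T \subset S ->
  cut w B S = cut w B T + cut w B (S :\: T).
Proof. move=> TS; by rewrite cut_sym (cut_splitL _ TS) !(cut_sym B). Qed.

Definition g (S T : {set V}) := cut w T (S :\: T).

Lemma good_exists (S : {set V}) : exists T : {set V}, (T \subset S) && (cut w S S <= 4 * g S T).
Proof.
have [T TS Tmax] := @arg_maxP _ _ {set V} S (fun T : {set V} => T \subset S) (g S) (subxx S).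
exists T; rewrite TS /=.
have h1 : cut w T T <= g S T.
  rewrite /cut /g /cut; apply: ler_sum => u uT.
  have uS : u \in S by apply: (subsetP TS).
  have := Tmax (T :\ u) (subset_trans (subD1set T u) TS).
  rewrite /g (cutL _ uT) (@cutR (T :\ u) (S :\: (T :\ u)) u); last by rewrite !inE eqxx uS.
  have -> : (S :\: (T :\ u)) :\ u = S :\: T.
    by apply/setP => x; rewrite !inE; case: eqP => // ->; rewrite uT uS.
  move=> /= H.
  have -> : \sum_(v in T) w u v = \sum_(a in T :\ u) w a u.
    transitivity (\sum_(a in T) w a u); first by apply: eq_bigr => ? _; apply: w_sym.
    by rewrite sum_noloop; apply: eq_bigr => ? _; apply: w_sym.
  move: H; lra.
have h2 : cut w (S :\: T) (S :\: T) <= cut w (S :\: T) T.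
  rewrite /cut; apply: ler_sum => u uX.
  have uS : u \in S by move: uX; rewrite inE => /andP[].
  have uT : u \notin T by move: uX; rewrite inE => /andP[].
  have uTS : u |: T \subset S by rewrite subUset sub1set uS TS.
  have := Tmax (u |: T) uTS.
  rewrite /g (@cutL (u |: T) (S :\: (u |: T)) u); last by rewrite !inE eqxx.
  rewrite (@cutR T (S :\: T) u uX).
  have -> : (u |: T) :\ u = T.
    by apply/setP => x; rewrite !inE; case: eqP => // ->; rewrite (negbTE uT).
  have -> : S :\: (u |: T) = (S :\: T) :\ u.
    by apply/setP => x; rewrite !inE; case: eqP.
  move=> /= H.
  have -> : \sum_(v in S :\: T) w u v = \sum_(a in (S :\: T) :\ u) w u a.
    transitivity (\sum_(a in S :\: T) w a u); first by apply: eq_bigr => ? _; apply: w_sym.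
    by rewrite sum_noloop.
  have -> : \sum_(v in T) w u v = \sum_(a in T) w a u.
    by apply: eq_bigr => ? _; apply: w_sym.
  move: H; lra.
rewrite (cut_splitL _ TS) !(cut_splitR _ TS).
move: h1 h2; rewrite /g (cut_sym (S :\: T) T); lra.
Qed.
End H.

Section Seq.
Variable R : realFieldType.
Lemma bmin_le (idx : R) s x : x \in s -> \big[Num.min/idx]_(y <- s) y <= x.
Proof.
elim: s => // a s IH; rewrite inE big_cons => /orP[/eqP->|xs].
  by rewrite ge_min lexx.
by rewrite ge_min IH // orbT.
Qed.
Lemma bmax_ge (idx : R) s x : x \in s -> x <= \big[Num.max/idx]_(y <- s) y.
Proof.
elim: s => // a s IH; rewrite inE big_cons => /orP[/eqP->|xs].
  by rewrite le_max lexx.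
by rewrite le_max IH // orbT.
Qed.
Lemma bmin_mem (idx : R) s : \big[Num.min/idx]_(y <- s) y \in idx :: s.
Proof.
elim: s => [|a s IH]; first by rewrite big_nil mem_head.
rewrite big_cons minEle; case: ifP => _; first by rewrite !inE eqxx orbT.
move: IH; rewrite !inE => /orP[->|->] //; by rewrite !orbT.
Qed.
Lemma seq_min_le s x : x \in s -> seq_min s <= x :> R.
Proof. exact: bmin_le. Qed.
Lemma seq_max_ge s x : x \in s -> x <= seq_max s :> R.
Proof. exact: bmax_ge. Qed.
Lemma seq_min_mem (s : seq R) : s != [::] -> seq_min s \in s.
Proof.
case: s => // a s _; have := bmin_mem a (a :: s); rewrite /seq_min /=.
by rewrite inE => /orP[/eqP->|//]; rewrite mem_head.
Qed.
End Seq.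

Unset Implicit Arguments.
Theorem proposition3p5 (R : realFieldType) (V : finType) (w : V -> V -> R)
  (w_sym : forall u v, w u v = w v u)
  (w_ge0 : forall u v, 0 <= w u v)
  (w_noloop : forall u, w u u = 0)
  (deg_pos : forall u, 0 < deg w u)
  (k : nat) (k_ge1 : (1 <= k)%N) (k_leN : (k <= #|V|)%N) :
  (1 - hk w k) / 2 <= hbark w k.
Proof.
pose F0 : {ffun 'I_k -> {set V}} := [ffun i => [set enum_val (widen_ord k_leN i)]].
have F0adm : adm_h F0.
  apply/andP; split; apply/forallP => i.
    by rewrite ffunE; apply/set0Pn; exists (enum_val (widen_ord k_leN i)); rewrite inE.
  apply/forallP => j; apply/implyP => ij; rewrite !ffunE disjoints1 inE.
  apply/negP => /eqP /enum_val_inj /(congr1 val) /= /val_inj eij.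
  by rewrite eij eqxx in ij.
have : hk w k \in [seq seq_max [seq phi w (F i) | i <- enum 'I_k]
          | F : {ffun 'I_k -> {set V}} <- enum (@adm_h V k)].
  apply: seq_min_mem; apply/eqP => /(congr1 size); rewrite size_map.
  by move/eqP; rewrite -cardE; apply/negP; rewrite -lt0n; apply/card_gt0P; exists F0.
case/mapP => F; rewrite mem_enum => Fadm hkE.
have phiF i : phi w (F i) <= hk w k.
  by rewrite hkE; apply: seq_max_ge; apply: map_f; rewrite mem_enum.
have /andP[Fne Fdis] : adm_h F := Fadm.
pose Tsel (S : {set V}) := odflt set0
  [pick T : {set V} | (T \subset S) && (cut w S S <= 4 * g w S T)].
have TselP S : (Tsel S \subset S) && (cut w S S <= 4 * g w S (Tsel S)).
  rewrite /Tsel; case: pickP => [T -> //|H].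
  by have [T HT] := good_exists w_sym w_noloop S; rewrite H in HT.
pose P : {ffun 'I_k -> {set V} * {set V}} :=
  [ffun i => (Tsel (F i), F i :\: Tsel (F i))].
have Padm : adm_hbar P.
  have TS i : Tsel (F i) \subset F i by have /andP[] := TselP (F i).
  have UE i : Tsel (F i) :|: F i :\: Tsel (F i) = F i.
    by have := setID (F i) (Tsel (F i)); rewrite (setIidPr (TS i)).
  have DS i : F i :\: Tsel (F i) \subset F i by apply: subsetDl.
  apply/andP; split; first (apply/andP; split).
  - apply/forallP => i; rewrite ffunE /=.
    by rewrite UE; move/forallP: Fne; apply.
  - apply/forallP => i; rewrite ffunE /=.
    by rewrite disjoint_subset; apply/subsetP => x xT; rewrite !inE xT.
  apply/forallP => i; apply/forallP => j; apply/implyP => ij; rewrite !ffunE /=.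
  have dij : [disjoint F i & F j] by move/forallP: Fdis => /(_ i)/forallP/(_ j); rewrite ij.
  by rewrite !(disjointW _ _ dij).
apply: le_trans (_ : seq_min [seq phibar w (P i).1 (P i).2 | i <- enum 'I_k] <= _); last first.
  by apply: seq_max_ge; apply: map_f; rewrite mem_enum.
have : seq_min [seq phibar w (P i).1 (P i).2 | i <- enum 'I_k] \in
   [seq phibar w (P i).1 (P i).2 | i <- enum 'I_k].
  apply: seq_min_mem; rewrite -size_eq0 size_map size_enum_ord -lt0n //.

case/mapP => i _ ->; rewrite ffunE /=.
have /andP[TS Tgood] := TselP (F i).
move: (Tsel (F i)) TS Tgood => T TS Tgood.
have := phiF i; move: (Fne); move/forallP/(_ i).
move: (F i) TS Tgood => S TS Tgood Sne phiS.
have volE : vol w S = cut w S S + cut w S (~: S).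
  rewrite /vol /cut -big_split /=; apply: eq_bigr => u _.
  rewrite /deg (bigID (fun v => v \in S)) /=; congr (_ + _).
  by apply: eq_bigl => v; rewrite inE.
have volpos : 0 < vol w S.
  have [x xS] := set0Pn _ Sne.
  rewrite /vol (bigD1 x) //=; apply: ltr_pwDl (deg_pos x) _.
  by apply: sumr_ge0 => u _; apply: ltW.
have UE : T :|: S :\: T = S by have := setID S T; rewrite (setIidPr TS).
rewrite /phibar UE ler_pdivlMr //.
move: phiS; rewrite /phi ler_pdivrMr // => phiS.
move: Tgood; rewrite /g volE in phiS * => Tgood.
nra.
Qed.
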